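(* Let $d\ge2$, $q\ge2$, $p\in\mathbb{Z}/q\mathbb{Z}$ with $\gcd(p,q)=1$, and let $\mathcal{O}_1,\dots,\mathcal{O}_n$ be pairwise distinct $\sigma_d$-rotational orbits, each with rotation number $p/q$. Let $A=\bigcup_{i=1}^n\mathcal{O}_i=\{u_0<\dots<u_{nq-1}\}$. Then $A$ is $\sigma_d$-rotational with $\sigma_d(u_j)=u_{j+np}$ for all $j\in\mathbb{Z}/nq\mathbb{Z}$ (rotation number $p/q$) if and only if the representative sequences of $\mathcal{O}_1,\dots,\mathcal{O}_n$ can be interlaced.
   Context: $\mathbb{T}=\mathbb{R}/\mathbb{Z}$, ordered by representatives in $[0,1)$; $\sigma_d(t)=dt$. A finite set $\{u_0<\dots<u_{N-1}\}$ is $\sigma_d$-rotational if $\sigma_d(u_j)=u_{j+P}$ for a fixed $0\ne P\in\mathbb{Z}/N\mathbb{Z}$; rotation number $P/N$. $q$-tuple notation: $(a_0,\dots,a_{q-1})$, $a_i\in\{0,\dots,d-1\}$, denotes the point with base-$d$ expansion $0.\overline{a_0\dots a_{q-1}}$, digit indices in $\mathbb{Z}/q\mathbb{Z}$. A $(d-1)$-sequence of length $k$ is a nondecreasing sequence of length $k$ with terms in $\{0,\dots,d-2\}$. Representative sequence: let $1\le p\le q-1$, $p^*$ the inverse of $p$ mod $q$, and let $\mathcal{O}$ be a $\sigma_d$-rotational orbit with rotation number $p/q$ whose least element is $t=(a_0,\dots,a_{q-1})$. Its representative sequence is $c_0,\dots,c_{q-1}$ with $c_k=a_{kp^*}$ for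 $0\le k\le q-p-1$ and $c_k=a_{kp^*}-1$ for $q-p\le k\le q-1$; it is a $(d-1)$-sequence of length $q$. Sequences $s_i=b^{(i)}_0,\dots,b^{(i)}_{q-1}$ ($1\le i\le n$) can be interlaced if for some relabeling (permutation) of the indices $i$, the sequence $b^{(1)}_0,\dots,b^{(n)}_0,b^{(1)}_1,\dots,b^{(n)}_1,\dots,b^{(1)}_{q-1},\dots,b^{(n)}_{q-1}$ is a $(d-1)$-sequence. *)

(* Defs.v *)
(* points of T = R/Z represented by reals in [0,1). *)
From HB Require Import structures.
From mathcomp Require Import all_boot all_order all_algebra.
From mathcomp Require Import fingroup perm reals.
Set Implicit Arguments. Unset Strict Implicit. Unset Printing Implicit Defensive.
Import Order.TTheory GRing.Theory Num.Theory.
Local Open Scope ring_scope.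

Definition sigma {R : realType} (d : nat) (x : R) : R :=
  d%:R * x - (Num.floor (d%:R * x))%:~R.

(* A finite set {u_0 < ... < u_{N-1}} of T, given as its strictly increasing
   list of representatives in [0,1), is sigma_d-rotational with
   sigma_d(u_j) = u_{j+P}, P nonzero in Z/NZ. *)
Definition rotational {R : realType} (d : nat) (u : seq R) (P : nat) : Prop :=
  [/\ sorted <%R u,
      all (fun x => (0 <= x) && (x < 1)) u,
      (P %% size u != 0)%N &
      forall j, (j < size u)%N ->
        sigma d (nth 0 u j) = nth 0 u ((j + P) %% size u)%N].

Definition is_orbit {R : realType} (d : nat) (u : seq R) : Prop :=
  exists x : R, forall y : R, y \in u <-> exists k : nat, y = iter k (sigma d) x.

Definition rot_orbit {R : realType} (d p q : nat) (u : seq R) : Prop :=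
  is_orbit d u /\
  exists P : nat, [/\ (P < size u)%N, rotational d u P &
     (P%:Q / (size u)%:Q = p%:Q / q%:Q)%R].

(* the point with base-d expansion 0.(a_0 ... a_{q-1}) repeated *)
Definition qtuple_val {R : realType} (d q : nat) (a : nat -> nat) : R :=
  (\sum_(i < q) (a i * d ^ (q - 1 - i))%N%:R) / ((d ^ q)%N%:R - 1).

(* c is the representative sequence (indices 0..q-1) of the orbit u,
   whose least element is head 0 u (u is sorted increasingly). *)
Definition rep_seq {R : realType} (d p q : nat) (u : seq R) (c : nat -> int) : Prop :=
  exists pstar : nat, ((p * pstar) %% q = 1)%N /\
  exists a : nat -> nat,
    [/\ (forall i, (i < q)%N -> (a i < d)%N),
        head 0 u = qtuple_val d q a &
        forall k, (k < q)%N ->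
          c k = if (k <= q - p - 1)%N then (a ((k * pstar) %% q)%N)%:Z
                else (a ((k * pstar) %% q)%N)%:Z - 1].

Definition dm1_seq (d len : nat) (b : nat -> int) : Prop :=
  forall m, (m < len)%N ->
    (0 <= b m) && (b m <= (d%:Z - 2)) /\ ((m.+1 < len)%N -> b m <= b m.+1).

Definition interlaceable (d q n : nat) (c : 'I_n -> nat -> int) : Prop :=
  exists s : {perm 'I_n},
    dm1_seq d (n * q)
      (fun m => match insub (m %% n)%N with
                | Some i => c (s i) (m %/ n)%N
                | None => 0
                end).
Arguments interlaceable : clear implicits.

(* Main.v *)
Require Import Defs.
From HB Require Import structures.
From mathcomp Require Import all_boot all_order all_algebra.
From mathcomp Require Import fingroup perm reals.
From mathcomp Require Import zify ring lra.
From Stdlib Require Import Lia.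
Import Order.TTheory GRing.Theory Num.Theory.

Lemma inv_mod p q : (1 < q)%N -> (0 < p)%N -> coprime p q -> exists ps, ((p * ps) %% q = 1)%N.
Proof.
move=> q1 p0 cop; case: (egcdnP q p0) => km kn e _.
exists km; rewrite mulnC e (eqP cop) modnMDl modn_small //.
Qed.

Lemma mod_decomp n q i m : (0 < q)%N -> (i < n)%N ->
  ((i + n * m) %% (n * q) = i + n * (m %% q))%N.
Proof.
move=> q0 ilt.
rewrite {1}(divn_eq m q) mulnDr addnCA.
rewrite [n * (_ * q)]mulnCA [n * q]mulnC modnMDl modn_small //.
have h : (m %% q < q)%N by rewrite ltn_mod.
have : (n * (m %% q).+1 <= n * q)%N by rewrite leq_mul2l h orbT.
rewrite mulnS [q * n]mulnC; move: (n * (m %% q)) (n * q) => x y H. lia.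
Qed.
Lemma iter_psi n p q a j : (0 < n * q)%N -> (a < n * q)%N ->
  (iter j (fun x => (x + n * p) %% (n * q)) a = (a + j * (n * p)) %% (n * q))%N.
Proof.
move=> nq0 aN; elim: j => [|j IH].
  by rewrite /= mul0n addn0 modn_small.
by rewrite iterS IH modnDml mulSn [n * p + _]addnC addnA.
Qed.

Lemma iter_psi_q n p q a : (0 < n * q)%N -> (a < n * q)%N ->
  (iter q (fun x => (x + n * p) %% (n * q)) a = a)%N.
Proof.
move=> nq0 aN; rewrite iter_psi // [n * p]mulnC mulnCA [q * n]mulnC addnC.
by rewrite modnMDl modn_small.
Qed.

Lemma sum_stepn (a : nat -> nat) (d r : nat) :
  (\sum_(i < r.+1) a i * d ^ (r.+1 - 1 - i) = (\sum_(i < r) a i * d ^ (r - 1 - i)) * d + a r)%N.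
Proof.
rewrite big_ord_recr /= big_distrl /=.
have -> : (r.+1 - 1 - r = 0)%N by lia.
rewrite expn0 muln1; congr (_ + _)%N; apply: eq_bigr => i _.
have -> : (r.+1 - 1 - i = (r - 1 - i).+1)%N by have := ltn_ord i; lia.
by rewrite expnSr mulnA.
Qed.

Local Open Scope ring_scope.

Lemma sum_step (R : comRingType) (E : nat -> R) (D : R) r :
  \sum_(i < r.+1) E i * D ^+ (r.+1 - 1 - i) = (\sum_(i < r) E i * D ^+ (r - 1 - i)) * D + E r.
Proof.
rewrite big_ord_recr /= mulr_suml.
have -> : (r.+1 - 1 - r = 0)%N by lia.
rewrite expr0 mulr1; congr (_ + _); apply: eq_bigr => i _.
have -> : (r.+1 - 1 - i = (r - 1 - i).+1)%N by have := ltn_ord i; lia.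
by rewrite exprSr mulrA.
Qed.

Lemma digits_uniq (d r : nat) (a b : nat -> nat) : (0 < d)%N ->
  (forall i, (i < r)%N -> (a i < d)%N) -> (forall i, (i < r)%N -> (b i < d)%N) ->
  (\sum_(i < r) a i * d ^ (r - 1 - i) = \sum_(i < r) b i * d ^ (r - 1 - i))%N ->
  forall i, (i < r)%N -> a i = b i.
Proof.
move=> d0; elim: r => [|r IH] ha hb; first by [].
rewrite !sum_stepn => e.
have ar : (a r < d)%N by apply: ha.
have br : (b r < d)%N by apply: hb.
have e1 : a r = b r.
  by move: (congr1 (fun z => z %% d)%N e) => /=; rewrite !modnMDl !modn_small.
have e2 := congr1 (fun z => z %/ d)%N e; move: e2 => /=.
rewrite !divnMDl // !divn_small // !addn0 => e2.
move=> i; rewrite ltnS leq_eqVlt => /orP[/eqP -> //|ir].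
apply: IH => // j jr; [apply: ha | apply: hb]; lia.
Qed.

Section Real.
Variable R : realType.

Lemma sigma_eq (d : nat) (x : R) : d%:R * x = (Num.floor (d%:R * x))%:~R + sigma d x.
Proof. by rewrite /sigma addrC subrK. Qed.

Lemma sigma_01 (d : nat) (x : R) : 0 <= sigma d x < 1.
Proof.
rewrite /sigma; have /andP[h1 h2] := floor_itv (d%:R * x).
rewrite intrD in h2; apply/andP; split; lra.
Qed.

Lemma per_formula (d : nat) (x : R) r :
  d%:R ^+ r * x = \sum_(i < r) (Num.floor (d%:R * iter i (sigma d) x))%:~R * d%:R ^+ (r - 1 - i)
     + iter r (sigma d) x.
Proof.
elim: r => [|r IH]; first by rewrite big_ord0 expr0 mul1r add0r.
rewrite (@sum_step R (fun i => (Num.floor (d%:R * iter i (sigma d) x))%:~R)) exprSr -mulrA [_ * x]mulrC mulrA [_ * d%:R]mulrC IH mulrDr iterS /sigma.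
ring.
Qed.

Lemma floor_range (d : nat) (x : R) : (0 < d)%N -> 0 <= x < 1 ->
  0 <= Num.floor (d%:R * x) /\ Num.floor (d%:R * x) < d%:Z.
Proof.
move=> d0 /andP[x0 x1]; split.
  by rewrite floor_ge_int /= mulr_ge0 ?ler0n.
have : d%:R * x < d%:R * 1 :> R by rewrite ltr_pM2l ?ltr0n.
by rewrite mulr1 floor_lt_int -pmulrn.
Qed.
End Real.

Lemma ratEq (P N p q : nat) : (0 < N)%N -> (0 < q)%N -> (P%:Q / N%:Q = p%:Q / q%:Q) -> (P*q = p*N)%N.
Proof.
move=> N0 q0 /eqP.
rewrite -!pmulrn eqr_div ?pnatr_eq0 -?lt0n // -!natrM eqr_nat => /eqP //.
Qed.

Lemma orbit_struct (R : realType) d p q (O : seq R) : (1 < q)%N -> (0 < p)%N -> coprime p q ->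
  rot_orbit d p q O ->
  [/\ size O = q, sorted <%R O, (forall x, x \in O -> 0 <= x < 1) &
      forall j, (j < q)%N -> sigma d (nth 0 O j) = nth 0 O ((j + p) %% q)].
Proof.
move=> q1 p0 cop [[x hx] [P [PN [so al Pn hs] hrat]]].
have uO : uniq O by apply: (sorted_uniq lt_trans ltxx).
have N0 : (0 < size O)%N by move: PN; lia.
have xO : x \in O by apply/(hx x).2; exists 0%N.
set j0 := index x O.
have j0N : (j0 < size O)%N by rewrite index_mem.
have ex : nth 0 O j0 = x by rewrite nth_index.
have it : forall k, iter k (sigma d) x = nth 0 O ((j0 + k * P) %% size O).
  elim=> [|k IH]; first by rewrite /= mul0n addn0 modn_small.
  rewrite iterS IH hs ?ltn_mod // modnDml.
  by have -> : (j0 + k.+1 * P = j0 + k * P + P)%N by rewrite mulSn; lia.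
have cPN : coprime P (size O).
  set y := nth 0 O ((j0 + 1) %% size O).
  have yO : y \in O by apply: mem_nth; rewrite ltn_mod.
  have [k0 yk] := (hx y).1 yO.
  rewrite it in yk.
  have /eqP e : ((j0 + 1) %% size O == (j0 + k0 * P) %% size O)%N.
    by rewrite -(nth_uniq 0 _ _ uO) ?ltn_mod // -/y yk.
  move/eqP: e; rewrite eqn_modDl => /eqP e.
  have gN := dvdn_gcdr P (size O); have gP := dvdn_gcdl P (size O).
  move: (congr1 (fun z => z %% gcdn P (size O))%N e) => /=.
  rewrite !modn_dvdm // (eqP (dvdn_mull k0 gP)) => e1.
  by rewrite /coprime -dvdn1 /dvdn e1.
have h := ratEq _ _ _ _ N0 (ltnW q1) hrat.
have cNP : coprime (size O) P by rewrite coprime_sym.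
have d1 : (size O %| q)%N.
  by rewrite -(Gauss_dvdr q cNP) h dvdn_mull.
have d2 : (q %| size O)%N.
  have cqp : coprime q p by rewrite coprime_sym.
  by rewrite -(Gauss_dvdr (size O) cqp) -h dvdn_mull.
have eN : size O = q by apply/eqP; rewrite eqn_dvd d1 d2.
have eP : P = p.
  by apply/eqP; rewrite -(eqn_pmul2r (ltnW q1)) h eN.
split => //.
- by move=> y yO; exact: (allP al y yO).
- by move=> j jq; rewrite hs eN ?eP.
Qed.

Section Mono.
Variable R : realType.
Lemma mono_key (d N K : nat) (w : nat -> R) (psi : nat -> nat) (G : nat -> int) :
  (1 < d)%N -> (0 < K)%N ->
  (forall a, (a < N)%N -> 0 <= w a < 1) ->
  (forall a, (a < N)%N -> (psi a < N)%N /\ d%:R * w a = (G a)%:~R + w (psi a)) ->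
  (forall a, (a.+1 < N)%N -> G a <= G a.+1 /\ (G a = G a.+1 -> psi a.+1 = (psi a).+1)) ->
  (forall a, (a < N)%N -> iter K psi a = a) ->
  (forall a, (a.+1 < N)%N -> w a != w a.+1) ->
  forall a, (a.+1 < N)%N -> w a < w a.+1.
Proof.
move=> d1 K0 H0 H2 H3 H4 H5 a aN.
have dpos : (0 : R) < d%:R by rewrite ltr0n; lia.
have key: forall r, w a < w a.+1 \/
   [/\ iter r psi a.+1 = (iter r psi a).+1, ((iter r psi a).+1 < N)%N &
       w (iter r psi a.+1) - w (iter r psi a) = d%:R ^+ r * (w a.+1 - w a)].
  elim=> [|r IH]; first by right; split=> //; rewrite expr0 mul1r.
  case: IH => [->|[e1 bN ed]]; first by left.
  move: e1 bN ed; set b := iter r psi a => e1 bN ed.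
  have [Gle Geq] := H3 b bN.
  have [pb db] := H2 b (ltnW bN). have [pb1 db1] := H2 b.+1 bN.
  have /andP[wb0 wb1] := H0 _ pb. have /andP[wc0 wc1] := H0 _ pb1.
  case: (eqVneq (G b) (G b.+1)) => [eG|nG].
    right; rewrite !iterS e1 -/b (Geq eG); split => //; first by rewrite -(Geq eG).
    have -> : w (psi b).+1 - w (psi b) = d%:R * (w b.+1 - w b).
      rewrite (Geq eG) in db1; rewrite mulrBr db db1 eG; ring.
    by rewrite e1 in ed; rewrite ed exprS mulrA.
  left.
  have lt : G b < G b.+1 by rewrite lt_neqAle nG Gle.
  have lt1 : ((G b)%:~R : R) + 1 <= (G b.+1)%:~R.
    have : ((G b + 1)%:~R : R) <= (G b.+1)%:~R by rewrite ler_int; lia.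
    by rewrite intrD.
  have : 0 < w b.+1 - w b.
    rewrite -(pmulr_rgt0 _ dpos) mulrBr db db1; lra.
  rewrite e1 in ed; rewrite ed pmulr_rgt0 ?exprn_gt0 // subr_gt0 //.
have [//|[e1 _ ed]] := key K.
rewrite !H4 // in e1 ed; last exact: ltnW.
exfalso; move/negP: (H5 a aN); apply; apply/eqP.
have dK : (d%:R : R) ^+ K != 1.
  rewrite -natrX pnatr_eq1 -(expn0 d) eqn_exp2l; lia.
have : (d%:R ^+ K - 1) * (w a.+1 - w a) = 0 by rewrite mulrBl -ed mul1r subrr.
move/eqP; rewrite mulf_eq0 subr_eq0 (negbTE dK) /= subr_eq0 => /eqP; lra.
Qed.

End Mono.
Lemma orbit_mem (R : realType) d p q (O : seq R) x : (1 < q)%N -> (0 < p)%N -> coprime p q ->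
  rot_orbit d p q O -> x \in O ->
  forall y, y \in O <-> exists k, y = iter k (sigma d) x.
Proof.
move=> q1 p0 cop hO xO.
have [sz so rng hs] := orbit_struct _ _ _ _ _ q1 p0 cop hO.
set j0 := index x O.
have j0N : (j0 < q)%N by rewrite -sz index_mem.
have it : forall k, iter k (sigma d) x = nth 0 O ((j0 + k * p) %% q).
  elim=> [|k IH]; first by rewrite /= mul0n addn0 modn_small ?nth_index.
  rewrite iterS IH hs ?ltn_mod; last by lia.
  rewrite modnDml.
  by have -> : (j0 + k.+1 * p = j0 + k * p + p)%N by rewrite mulSn; lia.
move=> y; split.
- move=> yO; set j1 := index y O.
  have j1N : (j1 < q)%N by rewrite -sz index_mem.
  have [ps hps] := inv_mod _ _ q1 p0 cop.
  exists ((j1 + (q - j0)) * ps)%N.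
  rewrite it -mulnA [(ps * p)%N]mulnC -modnDmr -modnMmr hps muln1 modnDmr.
  have -> : (j0 + (j1 + (q - j0)) = j1 + q)%N by lia.
  by rewrite modnDr modn_small // nth_index.
- case=> k ->; rewrite it mem_nth // sz ltn_mod; lia.
Qed.

Definition Fdig (R : realType) (d : nat) (O : seq R) (k : nat) : int :=
  Num.floor (d%:R * nth 0 O k).
Arguments Fdig {R}.
Definition cdef (R : realType) (d p q : nat) (O : seq R) : nat -> int :=
  fun k => if (k <= q - p - 1)%N then Fdig d O k else Fdig d O k - 1.
Arguments cdef {R}.

Lemma iter_head (R : realType) d p q (O : seq R) : (0 < q)%N -> size O = q ->
  (forall j, (j < q)%N -> sigma d (nth 0 O j) = nth 0 O ((j + p) %% q)) ->
  forall i, iter i (sigma d) (head 0 O) = nth 0 O ((i * p) %% q).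
Proof.
move=> q0 sz hs; elim=> [|i IH]; first by rewrite /= mod0n nth0.
by rewrite iterS IH hs ?ltn_mod // modnDml mulSn addnC.
Qed.

Lemma per_head (R : realType) d p q (O : seq R) : (0 < q)%N -> size O = q ->
  (forall j, (j < q)%N -> sigma d (nth 0 O j) = nth 0 O ((j + p) %% q)) ->
  head 0 O * (d%:R ^+ q - 1) =
  \sum_(i < q) (Fdig d O ((i * p) %% q))%:~R * d%:R ^+ (q - 1 - i).
Proof.
move=> q0 sz hs.
have := per_formula R d (head 0 O) q.
rewrite (iter_head _ _ _ _ _ q0 sz hs) modnMr -nth0 => e.
rewrite mulrBr mulr1 mulrC e addrK.
apply: eq_bigr => i _; by rewrite /Fdig (iter_head _ _ _ _ _ q0 sz hs).
Qed.
Lemma idx_inv q p ps k : ((p * ps) %% q = 1)%N -> (k < q)%N -> ((((k * ps) %% q) * p) %% q = k)%N.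
Proof.
move=> hps kq.
by rewrite modnMml -mulnA [(ps * p)%N]mulnC -modnMmr hps muln1 modn_small.
Qed.

Lemma Dnz (R : realType) (d q : nat) : (2 <= d)%N -> (0 < q)%N -> ((d ^ q)%N%:R - 1 : R) != 0.
Proof.
move=> d2 q0; rewrite subr_eq0 pnatr_eq1 -(expn0 d) eqn_exp2l; lia.
Qed.

Lemma RS_exists (R : realType) d p q (O : seq R) : (2 <= d)%N -> (1 < q)%N -> (0 < p)%N ->
  coprime p q -> rot_orbit d p q O -> rep_seq d p q O (cdef d p q O).
Proof.
move=> d2 q1 p0 cop hO.
have [sz so rng hs] := orbit_struct _ _ _ _ _ q1 p0 cop hO.
have Fr : forall k, (k < q)%N -> 0 <= Fdig d O k /\ Fdig d O k < d%:Z.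
  move=> k kq; apply: floor_range; first lia.
  by apply: rng; rewrite mem_nth // sz.
have [ps hps] := inv_mod _ _ q1 p0 cop.
have mq : forall i, ((i * p) %% q < q)%N by move=> i; rewrite ltn_mod; lia.
exists ps; split => //.
exists (fun i => `|Fdig d O ((i * p) %% q)|%N); split.
- move=> i _; have [h0 h1] := Fr ((i * p) %% q)%N (mq i); lia.
- rewrite /qtuple_val; apply: (mulIf (Dnz R d q d2 (ltnW q1))).
  rewrite /= divfK ?Dnz //; last lia.
  rewrite natrX (per_head _ _ _ _ _ (ltnW q1) sz hs).
  apply: eq_bigr => i _; rewrite natrM natrX natr_absz ger0_norm //.
  by case: (Fr ((i * p) %% q)%N (mq i)).
- move=> k kq; rewrite /cdef idx_inv // gez0_abs //.
  by case: (Fr k kq).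
Qed.
Lemma RS_unique (R : realType) d p q (O : seq R) c : (2 <= d)%N -> (1 < q)%N -> (0 < p)%N ->
  coprime p q -> rot_orbit d p q O -> rep_seq d p q O c ->
  forall k, (k < q)%N -> c k = cdef d p q O k.
Proof.
move=> d2 q1 p0 cop hO [ps [hps [a [ha hh hc]]]] k kq.
have [sz so rng hs] := orbit_struct _ _ _ _ _ q1 p0 cop hO.
have Fr : forall k, (k < q)%N -> 0 <= Fdig d O k /\ Fdig d O k < d%:Z.
  move=> k' kq'; apply: floor_range; first lia.
  by apply: rng; rewrite mem_nth // sz.
have mq : forall i, ((i * p) %% q < q)%N by move=> i; rewrite ltn_mod; lia.
have ea : forall i, (i < q)%N -> a i = `|Fdig d O ((i * p) %% q)|%N.
  apply: (digits_uniq d q) => //; first lia.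
    by move=> i _; have [h0 h1] := Fr ((i * p) %% q)%N (mq i); lia.
  apply/eqP; rewrite -(eqr_nat R); apply/eqP.
  have -> : ((\sum_(i < q) a i * d ^ (q - 1 - i))%N%:R : R) = head 0 O * ((d ^ q)%N%:R - 1).
    by rewrite hh /qtuple_val natr_sum divfK // Dnz //; lia.
  rewrite natrX (per_head _ _ _ _ _ (ltnW q1) sz hs) natr_sum.
  apply: eq_bigr => i _; rewrite natrM natrX natr_absz ger0_norm //.
  by case: (Fr ((i * p) %% q)%N (mq i)).
rewrite hc // /cdef ea ?ltn_mod; last lia.
rewrite idx_inv // gez0_abs //.
by case: (Fr k kq).
Qed.
Lemma insub_decomp n (i : 'I_n) k :
  insub ((i + n * k) %% n)%N = Some i /\ ((i + n * k) %/ n = k)%N.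
Proof.
have n0 : (0 < n)%N by apply: leq_ltn_trans (ltn_ord i).
have e : ((i + n * k) %% n = i)%N by rewrite mulnC addnC modnMDl modn_small.
split; first by rewrite e valK.
by rewrite mulnC addnC divnMDl // divn_small // addn0.
Qed.

Lemma decomp n m : (0 < n)%N -> exists i : 'I_n, m = (i + n * (m %/ n))%N.
Proof.
move=> n0; exists (Ordinal (ltn_pmod m n0)) => /=.
by rewrite {1}(divn_eq m n) addnC mulnC.
Qed.

Lemma lt_nq n q i k : (i < n)%N -> (k < q)%N -> (i + n * k < n * q)%N.
Proof.
move=> ilt klt; have : (n * k.+1 <= n * q)%N by rewrite leq_mul2l klt orbT.
rewrite mulnS; move: (n * k)%N (n * q)%N => x y; lia.
Qed.

Lemma ind_iff n q p i k : (i < n)%N -> (n * (q - p) <= i + n * k)%N = (q - p <= k)%N.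
Proof.
move=> ilt; apply/idP/idP => h.
  rewrite leqNgt; apply/negP => lt.
  have : (n * k.+1 <= n * (q - p))%N by rewrite leq_mul2l lt orbT.
  rewrite mulnS; move: h; move: (n * k)%N (n * (q - p))%N => x y; lia.
have : (n * (q - p) <= n * k)%N by rewrite leq_mul2l h orbT.
move: (n * k)%N (n * (q - p))%N => x y; lia.
Qed.

Lemma sorted_consec (T : Type) (r : rel T) (w : nat -> T) m N :
  (forall a, (m <= a)%N -> (a.+1 < m + N)%N -> r (w a) (w a.+1)) ->
  sorted r (map w (iota m N)).
Proof.
elim: N m => [|N IH] m h //=.
case: N IH h => [|N] IH h //=.
apply/andP; split; first by apply: h; lia.
by have := IH m.+1 (fun a h1 h2 => h a (ltnW h1) ltac:(lia)).
Qed.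

Lemma uniq_flatten_disj (T I : eqType) (f : I -> seq T) (l : seq I) :
  uniq l -> (forall i, uniq (f i)) -> (forall i j x, x \in f i -> x \in f j -> i = j) ->
  uniq (flatten (map f l)).
Proof.
elim: l => //= i l IH /andP[il ul] hu hd.
rewrite cat_uniq hu IH // andbT.
apply/hasPn => x /flatten_mapP [j jl xj]; apply/negP => xi.
by have eij := hd _ _ _ xi xj; rewrite eij jl in il.
Qed.

Lemma size_flatten_const (T I : Type) (f : I -> seq T) (l : seq I) q :
  (forall i, size (f i) = q) -> size (flatten (map f l)) = (size l * q)%N.
Proof.
move=> h; elim: l => //= i l IH; by rewrite size_cat IH h mulSn.
Qed.

Lemma modn_sub N x : (N <= x)%N -> (x < N + N)%N -> (x %% N = x - N)%N.
Proof.
move=> h1 h2; rewrite -{1}(subnK h1) modnDr modn_small //; lia.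
Qed.
Lemma orbit_disj (R : realType) d q p n (hq : (2 <= q)%N) (hp0 : (0 < p)%N) (hcop : coprime p q)
  (O : 'I_n -> seq R) (hO : forall i, rot_orbit d p q (O i))
  (hdist : forall i j, O i =i O j -> i = j) :
  forall i j x, x \in O i -> x \in O j -> i = j.
Proof.
move=> i j x xi xj; apply: hdist => y; apply/idP/idP => hy.
- have [k ->] := (orbit_mem _ _ _ _ _ x hq hp0 hcop (hO i) xi y).1 hy.
  by apply/(orbit_mem _ _ _ _ _ x hq hp0 hcop (hO j) xj _).2; exists k.
- have [k ->] := (orbit_mem _ _ _ _ _ x hq hp0 hcop (hO j) xj y).1 hy.
  by apply/(orbit_mem _ _ _ _ _ x hq hp0 hcop (hO i) xi _).2; exists k.
Qed.

Lemma backward (R : realType) (d q p n : nat)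
  (hd : (2 <= d)%N) (hq : (2 <= q)%N) (hp0 : (0 < p)%N) (hpq : (p < q)%N)
  (hcop : coprime p q) (hn : (0 < n)%N)
  (O : 'I_n -> seq R)
  (hO : forall i, rot_orbit d p q (O i))
  (hdist : forall i j, O i =i O j -> i = j)
  (u : seq R) (hu : sorted <%R u)
  (hA : forall x, x \in u = [exists i, x \in O i])
  (c : 'I_n -> nat -> int) :
  (forall i, rep_seq d p q (O i) (c i)) -> interlaceable d q n c ->
  rotational d u (n * p)%N.
Proof.
move=> hc [s hb].
have OS := fun i => orbit_struct _ _ _ _ _ hq hp0 hcop (hO i).
have disj := orbit_disj _ _ _ _ _ hq hp0 hcop _ hO hdist.
set N := (n * q)%N.
have N0 : (0 < N)%N by rewrite muln_gt0 hn; lia.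
set w := fun m => match insub (m %% n)%N with
                  | Some i => nth 0 (O (s i)) (m %/ n)%N | None => 0 end.
set b := fun m => match insub (m %% n)%N with
                  | Some i => c (s i) (m %/ n)%N | None => 0 end.
have hb' : dm1_seq d N b := hb.
have wE : forall (i : 'I_n) k, w (i + n * k)%N = nth 0 (O (s i)) k.
  by move=> i k; rewrite /w; have [-> ->] := insub_decomp _ i k.
have bE : forall (i : 'I_n) k, b (i + n * k)%N = c (s i) k.
  by move=> i k; rewrite /b; have [-> ->] := insub_decomp _ i k.
have dec : forall m, (m < N)%N -> exists (i : 'I_n) k, (k < q)%N /\ m = (i + n * k)%N.
  move=> m mN; have [i ei] := decomp _ m hn; exists i, (m %/ n)%N; split => //.
  by rewrite ltn_divLR // mulnC.
have cE : forall (i : 'I_n) k, (k < q)%N -> c (s i) k = cdef d p q (O (s i)) k.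
  by move=> i k kq; apply: (RS_unique _ _ _ _ _ _ hd hq hp0 hcop (hO (s i)) (hc (s i))).
set G := fun m => Num.floor (d%:R * w m).
set T := (n * (q - p))%N.
have NT : N = (T + n * p)%N by rewrite /N /T -mulnDr subnK // ltnW.
have Gb : forall m, (m < N)%N -> G m = b m + (if (T <= m)%N then 1 else 0).
  move=> m /dec [i [k [kq ->]]].
  rewrite bE cE // /cdef /G wE /T ind_iff //.
  case: (leqP (q - p) k) => h.
    by rewrite ifF; [rewrite /Fdig; lia | lia].
  by rewrite ifT; [rewrite /Fdig; lia | lia].
set psi := fun x => ((x + n * p) %% N)%N.
have psiE : forall (i : 'I_n) k, psi (i + n * k)%N = (i + n * ((k + p) %% q))%N.
  by move=> i k; rewrite /psi -addnA -mulnDr mod_decomp //; lia.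
have H0 : forall a, (a < N)%N -> 0 <= w a < 1.
  move=> a /dec [i [k [kq ->]]]; rewrite wE.
  have [sz _ rng _] := OS (s i); by apply: rng; rewrite mem_nth // sz.
have H2 : forall a, (a < N)%N -> (psi a < N)%N /\ d%:R * w a = (G a)%:~R + w (psi a).
  move=> a aN; split; first by rewrite /psi ltn_mod.
  rewrite sigma_eq; congr (_ + _).
  have [i [k [kq ea]]] := dec a aN.
  have [sz _ _ hs] := OS (s i).
  by rewrite ea psiE !wE hs.
have H3 : forall a, (a.+1 < N)%N -> G a <= G a.+1 /\ (G a = G a.+1 -> psi a.+1 = (psi a).+1).
  move=> a aN.
  have [_ hm] := hb' a (ltnW aN).
  have hm' := hm aN.
  rewrite (Gb a (ltnW aN)) (Gb a.+1 aN).
  case: (leqP T a) => ha.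
    rewrite ifT; last by lia.
    split; first lia.
    move=> _; rewrite /psi !modn_sub; lia.
  case: (leqP T a.+1) => ha1.
    split; first lia.
    move=> e; exfalso; lia.
  split; first lia.
  move=> _; rewrite /psi !modn_small; lia.
have H4 : forall a, (a < N)%N -> iter q psi a = a.
  by move=> a aN; apply: iter_psi_q.
have winj : forall a a', (a < N)%N -> (a' < N)%N -> w a = w a' -> a = a'.
  move=> a a' /dec [i [k [kq ->]]] /dec [i' [k' [kq' ->]]]; rewrite !wE => e.
  have [sz so _ _] := OS (s i).
  have [sz' _ _ _] := OS (s i').
  have x1 : nth 0 (O (s i)) k \in O (s i) by rewrite mem_nth // sz.
  have x2 : nth 0 (O (s i)) k \in O (s i') by rewrite e mem_nth // sz'.
  have ei := perm_inj (disj _ _ _ x1 x2); subst i'.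
  have uO : uniq (O (s i)) by apply: (sorted_uniq lt_trans ltxx).
  have h : nth 0 (O (s i)) k == nth 0 (O (s i)) k' by rewrite e.
  by move: h; rewrite nth_uniq ?sz // => /eqP ->.
have H5 : forall a, (a.+1 < N)%N -> w a != w a.+1.
  move=> a aN; apply/eqP => e; have := winj _ _ (ltnW aN) aN e; lia.
have mono := mono_key R d N q w psi G hd (ltnW hq) H0 H2 H3 H4 H5.
have eu : u = map w (iota 0 N).
  apply: (irr_sorted_eq lt_trans ltxx hu).
    apply: sorted_consec => a _ aN; exact: mono.
  move=> x; rewrite hA; apply/existsP/idP.
    case=> j xj.
    pose i := (s^-1)%g j.
    have xi : x \in O (s i) by rewrite /i permKV.
    have [sz _ _ _] := OS (s i).
    set k := index x (O (s i)).
    have kq : (k < q)%N by rewrite -sz index_mem.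
    apply/mapP; exists (i + n * k)%N; first by rewrite mem_iota /= lt_nq.
    by rewrite wE nth_index.
  case/mapP=> a; rewrite mem_iota /= => aN ->.
  have [i [k [kq ea]]] := dec a aN.
  have [sz _ _ _] := OS (s i).
  by exists (s i); rewrite ea wE mem_nth // sz.
have szu : size u = N by rewrite eu size_map size_iota.
have nthu : forall j, (j < N)%N -> nth 0 u j = w j.
  by move=> j jN; rewrite eu (nth_map 0%N) ?size_iota // nth_iota.
split => //.
- apply/allP => x; rewrite eu => /mapP [a]; rewrite mem_iota /= => aN ->; exact: H0.
- rewrite szu modn_small; first by rewrite -lt0n muln_gt0 hn hp0.
  by rewrite /N ltn_pmul2l.
- move=> j; rewrite szu => jN.
  have [_ e] := H2 j jN.
  rewrite nthu // nthu ?ltn_mod //.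
  transitivity (d%:R * w j - (G j)%:~R); first by [].
  by rewrite e addrC addKr.
Qed.
Lemma forward (R : realType) (d q p n : nat)
  (hd : (2 <= d)%N) (hq : (2 <= q)%N) (hp0 : (0 < p)%N) (hpq : (p < q)%N)
  (hcop : coprime p q) (hn : (0 < n)%N)
  (O : 'I_n -> seq R)
  (hO : forall i, rot_orbit d p q (O i))
  (hdist : forall i j, O i =i O j -> i = j)
  (u : seq R) (hu : sorted <%R u)
  (hA : forall x, x \in u = [exists i, x \in O i]) :
  rotational d u (n * p)%N ->
  exists c : 'I_n -> nat -> int,
    (forall i, rep_seq d p q (O i) (c i)) /\ interlaceable d q n c.
Proof.
move=> [so al Pn hsu].
have OS := fun i => orbit_struct _ _ _ _ _ hq hp0 hcop (hO i).
have disj := orbit_disj _ _ _ _ _ hq hp0 hcop _ hO hdist.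
set N := (n * q)%N.
have N0 : (0 < N)%N by rewrite muln_gt0 hn; lia.
have uu : uniq u by apply: (sorted_uniq lt_trans ltxx).
have szu : size u = N.
  have uL : uniq (flatten (map O (enum 'I_n))).
    apply: uniq_flatten_disj => //; first exact: enum_uniq.
    by move=> i; have [_ so' _ _] := OS i; apply: (sorted_uniq lt_trans ltxx).
  have pe : perm_eq u (flatten (map O (enum 'I_n))).
    apply: uniq_perm => // x; rewrite hA.
    apply/existsP/flatten_mapP.
      by case=> i xi; exists i => //; rewrite mem_enum.
    by case=> i _ xi; exists i.
  rewrite (perm_size pe) (size_flatten_const _ _ _ _ q) ?size_enum_ord //.
  by move=> i; have [] := OS i.
rewrite szu in hsu Pn.
have itu : forall k a, (a < N)%N ->
    iter k (sigma d) (nth 0 u a) = nth 0 u ((a + k * (n * p)) %% N)%N.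
  move=> k a aN; elim: k => [|k IH]; first by rewrite /= mul0n addn0 modn_small.
  rewrite iterS IH hsu ?ltn_mod // modnDml.
  by have -> : (a + k.+1 * (n * p) = a + k * (n * p) + n * p)%N by rewrite mulSn; lia.
have iN : forall i : 'I_n, (i < N)%N.
  by move=> i; have := lt_nq _ _ _ 0 (ltn_ord i) (ltnW hq); rewrite muln0 addn0.
have hex : forall i : 'I_n, exists j, nth 0 u i \in O j.
  by move=> i; apply/existsP; rewrite -hA mem_nth // szu.
pose s0 := fun i => xchoose (hex i).
have hs0 : forall i : 'I_n, nth 0 u i \in O (s0 i) by move=> i; exact: (xchooseP (hex i)).
have [ps hps] := inv_mod _ _ hq hp0 hcop.
have Omem : forall (i : 'I_n) y, (y \in O (s0 i)) = (y \in map (fun k => nth 0 u (i + n * k)%N) (iota 0 q)).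
  move=> i y; apply/idP/idP.
    move/(orbit_mem _ _ _ _ _ _ hq hp0 hcop (hO (s0 i)) (hs0 i) y).1 => [k ->].
    rewrite itu // mulnCA mod_decomp //; last lia.
    by apply/mapP; exists ((k * p) %% q)%N => //; rewrite mem_iota /= ltn_mod; lia.
  case/mapP => k; rewrite mem_iota /= => kq ->.
  apply/(orbit_mem _ _ _ _ _ _ hq hp0 hcop (hO (s0 i)) (hs0 i) _).2.
  exists (k * ps)%N; rewrite itu // mulnCA mod_decomp //; last lia.
  by rewrite -modnMml idx_inv.
have Osort : forall i : 'I_n, O (s0 i) = map (fun k => nth 0 u (i + n * k)%N) (iota 0 q).
  move=> i; apply: (irr_sorted_eq lt_trans ltxx); first by case: (OS (s0 i)).
    apply: sorted_consec => a _ aq.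
    rewrite (lt_sorted_ltn_nth 0 hu) ?inE ?szu ?lt_nq //; last lia.
    by rewrite ltn_add2l ltn_pmul2l.
  by move=> y; rewrite Omem.
have nthO : forall (i : 'I_n) k, (k < q)%N -> nth 0 (O (s0 i)) k = nth 0 u (i + n * k)%N.
  by move=> i k kq; rewrite Osort (nth_map 0%N) ?size_iota // nth_iota.
have s0inj : injective s0.
  move=> i i' e.
  have : nth 0 u i' \in O (s0 i) by rewrite e hs0.
  rewrite Omem => /mapP [k]; rewrite mem_iota /= => kq /eqP.
  rewrite nth_uniq ?szu ?lt_nq // => /eqP e'.
  case: k kq e' => [|k] kq e'.
    by apply: val_inj; rewrite /= e' muln0 addn0.
  by exfalso; move: (ltn_ord i'); rewrite e' mulnS; lia.
pose s := perm s0inj.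
exists (fun i => cdef d p q (O i)); split.
  by move=> i; apply: RS_exists.
exists s.
set T := (n * (q - p))%N.
have NT : N = (T + n * p)%N by rewrite /N /T -mulnDr subnK // ltnW.
have T0 : (0 < T)%N by rewrite muln_gt0 hn subn_gt0 hpq.
have np0 : (0 < n * p)%N by rewrite muln_gt0 hn hp0.
pose E m := Num.floor (d%:R * nth 0 u m).
have Er : forall m, (m < N)%N -> 0 <= E m /\ E m < d%:Z.
  move=> m mN; apply: floor_range; first lia.
  by apply: (allP al); rewrite mem_nth // szu.
have Emon : forall m m', (m <= m')%N -> (m' < N)%N -> E m <= E m'.
  move=> m m' h1 h2; apply: le_floor; rewrite ler_wpM2l ?ler0n //.
  rewrite le_eqVlt; case: (ltngtP m m') h1 => // [lt|->] _; last by rewrite eqxx.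
  by apply/orP; right; rewrite (lt_sorted_ltn_nth 0 hu) ?inE ?szu //; lia.
have Ejump : E T.-1 < E T.
  have e1 := hsu T.-1 ltac:(lia).
  have e2 := hsu T ltac:(lia).
  have p1 : ((T.-1 + n * p) %% N = N.-1)%N by rewrite modn_small; lia.
  have p2 : ((T + n * p) %% N = 0)%N by rewrite -NT modnn.
  rewrite p1 in e1; rewrite p2 in e2.
  have s1 := sigma_eq R d (nth 0 u T.-1); have s2 := sigma_eq R d (nth 0 u T).
  rewrite e1 in s1; rewrite e2 in s2.
  have l1 : nth 0 u T.-1 < nth 0 u T by rewrite (lt_sorted_ltn_nth 0 hu) ?inE ?szu; lia.
  have l2 : nth 0 u 0 < nth 0 u N.-1 by rewrite (lt_sorted_ltn_nth 0 hu) ?inE ?szu; lia.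
  have l1' : d%:R * nth 0 u T.-1 < d%:R * nth 0 u T by rewrite ltr_pM2l // ltr0n; lia.
  have : (E T.-1)%:~R < (E T)%:~R :> R by rewrite /E; lra.
  by rewrite ltr_int.
pose b := fun m => match insub (m %% n)%N with
                   | Some i => cdef d p q (O (s i)) (m %/ n)%N | None => 0 end.
change (dm1_seq d N b).
have bE : forall m, (m < N)%N -> b m = E m - (if (T <= m)%N then 1 else 0).
  move=> m mN; have [i ei] := decomp _ m hn.
  move: ei; set k := (m %/ n)%N => ei.
  have kq : (k < q)%N by rewrite /k ltn_divLR // mulnC.
  have hk : (k <= q - p - 1)%N = ~~ (T <= m)%N.
    by rewrite ei /T ind_iff // -ltnNge; apply/idP/idP => ?; lia.
  rewrite /b ei; have [-> ->] := insub_decomp _ i k.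
  rewrite permE /cdef /Fdig nthO // -ei -/(E m) hk.
  by case: (T <= m)%N => /=; lia.
move=> m mN; rewrite (bE m mN); have [e0 ed] := Er m mN; split.
  have h1 := Er T ltac:(lia); have h2 := Er T.-1 ltac:(lia).
  apply/andP; case: (leqP T m) => h.
    by have := Emon T m h mN; split; lia.
  by have := Emon m T.-1 ltac:(lia) ltac:(lia); split; lia.
move=> m1N; rewrite (bE m.+1 m1N).
case: (leqP T m) => h.
  by rewrite ifT; [have := Emon m m.+1 (leqnSn m) m1N; lia | lia].
case: (leqP T m.+1) => h1.
  have eT : T = m.+1 by lia.
  by move: Ejump; rewrite eT /=; lia.
by have := Emon m m.+1 (leqnSn m) m1N; lia.
Qed.

Theorem corollary3p3 (R : realType) (d q p n : nat)
  (hd : (2 <= d)%N) (hq : (2 <= q)%N) (hp0 : (0 < p)%N) (hpq : (p < q)%N)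
  (hcop : coprime p q) (hn : (0 < n)%N)
  (O : 'I_n -> seq R)
  (hO : forall i, rot_orbit d p q (O i))
  (hdist : forall i j, O i =i O j -> i = j)
  (u : seq R) (hu : sorted <%R u)
  (hA : forall x, x \in u = [exists i, x \in O i]) :
  rotational d u (n * p)%N <->
  exists c : 'I_n -> nat -> int,
    (forall i, rep_seq d p q (O i) (c i)) /\ interlaceable d q n c.
Proof.
split.
  exact: (forward _ _ _ _ _ hd hq hp0 hpq hcop hn _ hO hdist _ hu hA).
case=> c [hc hi].
exact: (backward _ _ _ _ _ hd hq hp0 hpq hcop hn _ hO hdist _ hu hA _ hc hi).
Qed.
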